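(* Let $D$ be a slim, semimodular diagram (of size at least $4$). Then every element $x$ of the left boundary chain $C_\ell(D)$ with $x\le c_\ell(D)$ has at most one lower cover in $D$ (i.e., is not join-reducible).
   Context: A slim, semimodular diagram is a planar Hasse diagram of a finite (upper) semimodular lattice whose join-irreducible elements contain no three-element antichain. The left boundary chain $C_\ell(D)$ of a planar lattice diagram $D$ is the maximal chain from $0$ to $1$ forming the left boundary of the diagram. An element of $D$ is called doubly irreducible if it has at most one upper cover and at most one lower cover in $D$. $c_\ell(D)$ denotes the smallest doubly irreducible element of $C_\ell(D)$. *)

(* Defs.v *)
From HB Require Import structures.
From mathcomp Require Import all_boot all_order all_algebra.
Set Implicit Arguments. Unset Strict Implicit. Unset Printing Implicit Defensive.
Import Order.TTheory GRing.Theory Num.Theory.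

Section Lat.
Context {disp : Order.disp_t} {L : finTBLatticeType disp}.

Definition covers (x y : L) : bool :=
  ((x < y)%O && [forall z : L, ~~ ((x < z)%O && (z < y)%O)]).

Definition covers_eq (x y : L) : bool := (x == y) || covers x y.

Definition upper_semimodular : Prop :=
  forall a b c : L, covers a b -> covers_eq (a `|` c)%O (b `|` c)%O.

Definition join_irreducible (x : L) : Prop :=
  x <> \bot%O /\ forall y z : L, x = (y `|` z)%O -> x = y \/ x = z.

Definition slim : Prop :=
  forall x y z : L, join_irreducible x -> join_irreducible y -> join_irreducible z ->
    x <> y -> y <> z -> x <> z ->
    ~ [/\ ~~ (x >=< y)%O, ~~ (y >=< z)%O & ~~ (x >=< z)%O].

Definition lower_covers (x : L) : {set L} := [set y | covers y x].
Definition upper_covers (x : L) : {set L} := [set y | covers x y].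

Definition doubly_irreducible (x : L) : bool :=
  (#|lower_covers x| <= 1)%N && (#|upper_covers x| <= 1)%N.

End Lat.

Section Diagram.
Context {R : realFieldType}.
Local Open Scope ring_scope.

Definition on_segment (A B P : R * R) : Prop :=
  exists t : R, 0 <= t <= 1 /\
    P = ((1 - t) * A.1 + t * B.1, (1 - t) * A.2 + t * B.2).

(* determinant of the vectors u and v; det u v < 0 means that u points
   strictly to the left of v (clockwise from v) *)
Definition det2 (u v : R * R) : R := u.1 * v.2 - u.2 * v.1.

Definition vsub (A B : R * R) : R * R := (A.1 - B.1, A.2 - B.2).

Context {disp : Order.disp_t} {L : finTBLatticeType disp}.

Definition planar_diagram (pos : L -> R * R) : Prop :=
  [/\ injective pos,
      (forall x y : L, covers x y -> (pos x).2 < (pos y).2),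
      (forall a b v : L, covers a b -> on_segment (pos a) (pos b) (pos v) ->
          v = a \/ v = b) &
      (forall a b c d : L, covers a b -> covers c d -> (a, b) <> (c, d) ->
          forall P : R * R, on_segment (pos a) (pos b) P ->
            on_segment (pos c) (pos d) P ->
            (P = pos a \/ P = pos b) /\ (P = pos c \/ P = pos d))].

(* The left boundary chain C_l(D): starts at 0, and from each of its
   elements x (other than 1) continues with the leftmost upper cover of x,
   i.e. the upper cover y such that the edge x->y lies strictly to the
   left of every other edge x->z going up from x. *)
Inductive left_boundary (pos : L -> R * R) : L -> Prop :=
  | lb_bot : left_boundary pos \bot%O
  | lb_step (x y : L) : left_boundary pos x -> covers x y ->
      (forall z : L, covers x z -> z <> y ->
         det2 (vsub (pos y) (pos x)) (vsub (pos z) (pos x)) < 0) ->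
      left_boundary pos y.

End Diagram.

(* Main.v *)
Require Import Defs.
From HB Require Import structures.
From mathcomp Require Import all_boot all_order all_algebra.
From mathcomp Require Import ring lra.
Import Order.TTheory GRing.Theory Num.Theory.
Set Implicit Arguments. Unset Strict Implicit. Unset Printing Implicit Defensive.

Section Geo.
Context {R : realFieldType}.
Local Open Scope ring_scope.

Definition ylt (A B : R * R) : bool := A.2 < B.2.
Definition xs (A B : R * R) (h : R) : R := A.1 + (h - A.2) / (B.2 - A.2) * (B.1 - A.1).
Fixpoint xat (A : R * R) (s : seq (R * R)) (h : R) : R :=
  match s with [::] => A.1 | B :: s' => if h <= B.2 then xs A B h else xat B s' h end.

Lemma ylt_trans : transitive ylt.
Proof. by move=> B A C; rewrite /ylt; apply: lt_trans. Qed.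

Lemma xs_left A B : xs A B A.2 = A.1.
Proof. by rewrite /xs subrr !mul0r addr0. Qed.

Lemma xs_right A B : A.2 < B.2 -> xs A B B.2 = B.1.
Proof.
move=> h; rewrite /xs divff ?mul1r; first by rewrite addrC subrK.
by rewrite subr_eq0 gt_eqF.
Qed.

Lemma xat_head A s : path ylt A s -> xat A s A.2 = A.1.
Proof. case: s => [|B s] //= /andP[hAB _]; by rewrite ltW // xs_left. Qed.

Lemma xat_vertex A s W : path ylt A s -> W \in A :: s -> xat A s W.2 = W.1.
Proof.
elim: s A => [|B s IH] A /=.
  by move=> _; rewrite inE => /eqP ->.
move=> /andP[hAB hp]; rewrite inE => /orP[/eqP -> | WB].
  by rewrite ltW // xs_left.
have hge : B.2 <= W.2.
  move: WB; rewrite inE => /orP[/eqP -> // | Ws].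
  have := order_path_min ylt_trans hp.
  by move=> /allP /(_ _ Ws) /ltW.
case: leP => hle.
  have eW : W.2 = B.2 by apply/eqP; rewrite eq_le hle hge.
  move: WB; rewrite inE => /orP[/eqP -> | Ws]; first by rewrite xs_right.
  have := order_path_min ylt_trans hp.
  by move=> /allP /(_ _ Ws); rewrite /ylt eW ltxx.
by apply: IH.
Qed.

Lemma xat_cat A p q h : all (fun W : R * R => W.2 < h) p ->
  xat A (p ++ q) h = xat (last A p) q h.
Proof.
elim: p A => [|B p IH] A //= /andP[hB hp].
by rewrite leNgt hB /= IH.
Qed.

Definition inside (h1 h2 : R) (W : R * R) : bool := (h1 < W.2) && (W.2 < h2).

Lemma xat_affine A s h1 h2 : path ylt A s -> A.2 <= h1 -> h1 <= h2 ->
  h2 <= (last A s).2 -> ~~ has (inside h1 h2) (A :: s) ->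
  exists al be, forall h, h1 <= h -> h <= h2 -> xat A s h = al + be * h.
Proof.
elim: s A => [|B s IH] A /=.
  by move=> _ _ _ _ _; exists A.1, 0 => h _ _; rewrite mul0r addr0.
move=> /andP[hAB hp] hA h12 hl /norP[_ hn].
case: (leP h2 B.2) => h2B.
  exists (A.1 - A.2 * ((B.1 - A.1) / (B.2 - A.2))), ((B.1 - A.1) / (B.2 - A.2)).
  move=> h _ hh; rewrite (le_trans hh h2B) /xs; ring.
have hB1 : B.2 <= h1.
  move: hn => /norP[hn _]; rewrite /inside h2B andbT -leNgt in hn; exact: hn.
have [al [be Hab]] := IH B hp hB1 h12 hl hn.
exists al, be => h hh1 hh2.
case: leP => hhB; last by apply: Hab.
have eh : h = B.2 by apply/eqP; rewrite eq_le hhB (le_trans hB1 hh1).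
rewrite eh xs_right // -Hab -?eh //; rewrite -eh in hhB.
by rewrite eh xat_head.
Qed.
End Geo.

Section Geo2.
Context {R : realFieldType}.
Local Open Scope ring_scope.

Lemma count_lt_sub (T : eqType) (P Q : pred T) (l : seq T) x :
  (forall y, P y -> Q y) -> x \in l -> Q x -> ~~ P x ->
  (count P l < count Q l)%N.
Proof.
move=> PQ; elim: l => [|y l IH] //= ; rewrite inE => /orP[/eqP <- | xl] Qx nPx.
  rewrite Qx (negbTE nPx) add0n add1n ltnS.
  by apply: sub_count => z; apply: PQ.
have := IH xl Qx nPx.
case Py: (P y); first by rewrite (PQ _ Py) /= ltn_add2l.
by move=> H; apply: (leq_trans H); apply: leq_addl.
Qed.

Lemma ivt0 (A B : R * R) s t h1 h2 :
  path ylt A s -> path ylt B t -> A.2 <= h1 -> B.2 <= h1 -> h1 <= h2 ->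
  h2 <= (last A s).2 -> h2 <= (last B t).2 ->
  ~~ has (inside h1 h2) (A :: s ++ B :: t) ->
  xat A s h1 < xat B t h1 -> xat B t h2 <= xat A s h2 ->
  exists h, h1 < h <= h2 /\ xat A s h = xat B t h.
Proof.
move=> pA pB hA hB h12 hlA hlB; rewrite -cat_cons has_cat => /norP[nA nB].
have [a1 [b1 E1]] := xat_affine pA hA h12 hlA nA.
have [a2 [b2 E2]] := xat_affine pB hB h12 hlB nB.
rewrite !E1 ?E2 // ?lexx // => f1 f2.
have hlt : h1 < h2.
  rewrite lt_neqAle h12 andbT; apply/negP => /eqP e; rewrite e in f1; lra.
set C := b1 - b2; set D := a1 - a2.
have Cpos : 0 < C by rewrite /C; nra.
pose r := - D / C.
have Er : D + C * r = 0 by rewrite /r; field; rewrite gt_eqF.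
have hr1 : h1 < r by rewrite /C /D in Er Cpos *; nra.
have hr2 : r <= h2 by rewrite /C /D in Er Cpos *; nra.
exists r; split; first by rewrite hr1 hr2.
rewrite E1 ?E2 ?(ltW hr1) //; rewrite /C /D in Er; lra.
Qed.

Lemma ivt n (A B : R * R) s t h1 h2 :
  (count (inside h1 h2) (A :: s ++ B :: t) <= n)%N ->
  path ylt A s -> path ylt B t -> A.2 <= h1 -> B.2 <= h1 -> h1 <= h2 ->
  h2 <= (last A s).2 -> h2 <= (last B t).2 ->
  xat A s h1 < xat B t h1 -> xat B t h2 <= xat A s h2 ->
  exists h, h1 < h <= h2 /\ xat A s h = xat B t h.
Proof.
elim: n h1 h2 => [|n IH] h1 h2 hc pA pB hA hB h12 hlA hlB f1 f2.
  apply: ivt0 => //; rewrite has_count; move: hc; case: count => //.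
case hh: (has (inside h1 h2) (A :: s ++ B :: t)); last first.
  by apply: ivt0 => //; rewrite hh.
move/hasP: hh => [W Win /andP[hW1 hW2]].
have cnt1 : forall h1' h2', h1 <= h1' -> h2' <= h2 -> (W.2 <= h1' \/ h2' <= W.2) ->
    (count (inside h1' h2') (A :: s ++ B :: t) <= n)%N.
  move=> h1' h2' e1 e2 ew; rewrite -ltnS; apply: (leq_trans _ hc).
  apply: (count_lt_sub (x := W)) => //.
  - move=> y /andP[y1 y2]; apply/andP; split; [exact: le_lt_trans y1|exact: lt_le_trans e2].
  - by rewrite /inside hW1 hW2.
  - rewrite /inside negb_and -!leNgt; case: ew => ->; rewrite ?orbT //.
case: (ltP (xat A s W.2) (xat B t W.2)) => hw.
  have [h [/andP[hh1 hh2] e]] : exists h, W.2 < h <= h2 /\ xat A s h = xat B t h.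
    apply: IH; first by apply: cnt1; rewrite ?(ltW hW1) ?lexx //; left.
    all: rewrite // ?(le_trans hA) ?(le_trans hB) ?(ltW hW1) ?(ltW hW2) //.
  by exists h; rewrite e (lt_trans hW1 hh1) hh2.
have [h [/andP[hh1 hh2] e]] : exists h, h1 < h <= W.2 /\ xat A s h = xat B t h.
  apply: IH; first by apply: cnt1; rewrite ?(ltW hW2) ?lexx //; right.
  all: rewrite // ?(ltW hW1) ?(le_trans (ltW hW2)) //.
by exists h; rewrite e hh1 (le_trans hh2 (ltW hW2)).
Qed.

Lemma xs_lt (A B C : R * R) h : A.2 < B.2 -> A.2 < C.2 ->
  det2 (vsub B A) (vsub C A) < 0 -> A.2 < h -> xs A B h < xs A C h.
Proof.
rewrite /det2 /vsub /= => hB hC hd hh.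
set d1 := B.2 - A.2 in hd *; set d2 := C.2 - A.2 in hd *.
have d1p : 0 < d1 by rewrite /d1 subr_gt0.
have d2p : 0 < d2 by rewrite /d2 subr_gt0.
set k1 := (B.1 - A.1) / d1; set k2 := (C.1 - A.1) / d2.
have e1 : B.1 - A.1 = k1 * d1 by rewrite /k1 mulrVK // unitfE gt_eqF.
have e2 : C.1 - A.1 = k2 * d2 by rewrite /k2 mulrVK // unitfE gt_eqF.
have E1 : xs A B h = A.1 + (h - A.2) * k1 by rewrite /xs /k1 -/d1; ring.
have E2 : xs A C h = A.1 + (h - A.2) * k2 by rewrite /xs /k2 -/d2; ring.
rewrite E1 E2 e1 e2 in hd *.
have ed : k1 * d1 * d2 - d1 * (k2 * d2) = (d1 * d2) * (k1 - k2) by ring.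
have hk : k1 < k2.
  rewrite ltNge; apply/negP => hk.
  have : 0 <= (d1 * d2) * (k1 - k2) by apply: mulr_ge0; [exact: ltW (mulr_gt0 d1p d2p)| rewrite subr_ge0].
  rewrite -ed; lra.
 have : 0 < h - A.2 by rewrite subr_gt0.
nra.
Qed.
End Geo2.

Section Lat1.
Context {disp : Order.disp_t} {L : finTBLatticeType disp}.
Local Open Scope order_scope.

Lemma covers_lt (x y : L) : covers x y -> x < y.
Proof. by case/andP. Qed.

Lemma exists_cover_n n (v c : L) : (#|[set d | (v < d < c)%O]| <= n)%N -> v < c ->
  exists c', covers v c' /\ c' <= c.
Proof.
elim: n c => [|n IH] c hc hvc.
  exists c; split => //; apply/andP; split => //; apply/forallP => d; apply/negP => hd.
  by move: hc; rewrite leqn0 => /eqP/cards0_eq/setP/(_ d); rewrite inE hd inE.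
case: (boolP [forall d, ~~ ((v < d) && (d < c))]) => hf.
  by exists c; split => //; apply/andP.
move: hf => /forallPn [d]; rewrite negbK => /andP[hvd hdc].
have [c' [h1 h2]] : exists c', covers v c' /\ c' <= d.
  apply: (IH d _ hvd); rewrite -ltnS; apply: leq_trans hc; apply: proper_card.
  apply/properP; split.
    by apply/subsetP => e; rewrite !inE => /andP[-> /lt_trans ->].
  by exists d; rewrite !inE ?hvd ?hdc ?ltxx ?andbF.
by exists c'; split => //; apply: le_trans h2 (ltW hdc).
Qed.

Lemma exists_cover (v c : L) : v < c -> exists c', covers v c' /\ c' <= c.
Proof. exact: exists_cover_n. Qed.

Lemma chain_n n (v w : L) : (#|[set d | (v < d <= w)%O]| <= n)%N -> v <= w ->
  exists s, path covers v s /\ last v s = w.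
Proof.
elim: n v => [|n IH] v hc hvw.
  case: (eqVneq v w) => [-> | hne]; first by exists [::].
  have hlt : v < w by rewrite lt_neqAle hne hvw.
  by move: hc; rewrite leqn0 => /eqP/cards0_eq/setP/(_ w); rewrite !inE hlt lexx.
case: (eqVneq v w) => [-> | hne]; first by exists [::].
have hlt : v < w by rewrite lt_neqAle hne hvw.
have [c [hc1 hc2]] := exists_cover hlt.
have [s [ps ls]] : exists s, path covers c s /\ last c s = w.
  apply: (IH c _ hc2); rewrite -ltnS; apply: leq_trans hc; apply: proper_card.
  apply/properP; split.
    by apply/subsetP => e; rewrite !inE => /andP[/(lt_trans (covers_lt hc1)) -> ->].
  by exists c; rewrite !inE ?(covers_lt hc1) ?hc2 ?ltxx.
by exists (c :: s); rewrite /= hc1 ps ls.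
Qed.

Lemma chain (v w : L) : v <= w -> exists s, path covers v s /\ last v s = w.
Proof. exact: chain_n. Qed.

Lemma path_gt (v : L) s : path covers v s -> all (fun w => v < w) s.
Proof.
move=> p; apply: (order_path_min (@lt_trans _ L)).
by apply: sub_path p => x y /covers_lt.
Qed.

Lemma path_le_last (v : L) s : path covers v s -> forall w, w \in v :: s -> w <= last v s.
Proof.
elim: s v => [|x s IH] v /=.
  by move=> _ w; rewrite inE => /eqP ->.
move=> /andP[hc p] w; rewrite inE => /orP[/eqP -> | ws].
  by apply: le_trans (ltW (covers_lt hc)) (IH _ p _ (mem_head _ _)).
exact: IH.
Qed.

Lemma path_ge_head (v : L) s : path covers v s -> forall w, w \in v :: s -> v <= w.
Proof.
move=> p w; rewrite inE => /orP[/eqP -> // | ws].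
by have := path_gt p => /allP /(_ _ ws) /ltW.
Qed.
End Lat1.

Section Lat2.
Context {R : realFieldType} {disp : Order.disp_t} {L : finTBLatticeType disp}.
Context (pos : L -> R * R) (Hpl : planar_diagram pos).
Local Open Scope ring_scope.
Local Open Scope order_scope.

Lemma covers_h (x y : L) : covers x y -> (pos x).2 < (pos y).2.
Proof. by case: Hpl => _ H _ _; apply: H. Qed.

Lemma path_ylt (v : L) s : path covers v s -> path ylt (pos v) (map pos s).
Proof. by move=> p; rewrite path_map; apply: sub_path p => x y /covers_h. Qed.

Lemma ylt_last (A : R * R) s : path ylt A s -> A.2 <= (last A s).2.
Proof.
elim: s A => [|B s IH] A //= /andP[hAB p].
exact: le_trans (ltW hAB) (IH _ p).
Qed.

Lemma le_h (v w : L) : v <= w -> (pos v).2 <= (pos w).2.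
Proof.
move=> /chain [s [p ls]]; have := ylt_last (path_ylt p).
by rewrite last_map ls.
Qed.

Lemma lt_h (v w : L) : v < w -> (pos v).2 < (pos w).2.
Proof.
move=> hvw; have [c [hc hcw]] := exists_cover hvw.
exact: lt_le_trans (covers_h hc) (le_h hcw).
Qed.

Lemma on_poly (v : L) s h : path covers v s -> s != [::] ->
  (pos v).2 <= h -> h <= (pos (last v s)).2 ->
  exists w1 w2, [/\ w1 \in v :: s, w2 \in v :: s, covers w1 w2 &
    on_segment (pos w1) (pos w2) (xat (pos v) (map pos s) h, h)].
Proof.
elim: s v => [|w s IH] v //= /andP[hc p] _ h1 h2.
case: (leP h (pos w).2) => hw.
  exists v, w; split; rewrite ?inE ?eqxx ?orbT //.
  have hd : ((0 : R) < (pos w).2 - (pos v).2)%R by rewrite subr_gt0 covers_h.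
  exists ((h - (pos v).2) / ((pos w).2 - (pos v).2))%R; split.
    apply/andP; split; first by apply: divr_ge0; [rewrite subr_ge0 | exact: ltW].
    by rewrite ler_pdivrMr // mul1r lerB.
  rewrite /xs; congr (_, _); first by ring.
  by field; rewrite gt_eqF.
have sne : s != [::].
  by move: h2 hw; case: s {IH p} => //= h2 hw; move: (lt_le_trans hw h2); rewrite ltxx.
have [w1 [w2 [i1 i2 hc12 hs]]] := IH w p sne (ltW hw) h2.
by exists w1, w2; split; rewrite // inE ?i1 ?i2 orbT.
Qed.

Lemma cross (a b c d : L) P : covers a b -> covers c d ->
  on_segment (pos a) (pos b) P -> on_segment (pos c) (pos d) P ->
  (a = c /\ b = d) \/ exists v, [/\ v = a \/ v = b, v = c \/ v = d & pos v = P].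
Proof.
case: Hpl => inj _ _ H4 hab hcd s1 s2.
case: (eqVneq (a, b) (c, d)) => [[-> ->] | hne]; first by left.
have hne' : (a, b) <> (c, d) by apply/eqP.
have [[e1|e1] [e2|e2]] := H4 a b c d hab hcd hne' P s1 s2.
- by right; exists a; split; [left|left; apply: inj; rewrite -e1 -e2|rewrite e1].
- by right; exists a; split; [left|right; apply: inj; rewrite -e1 -e2|rewrite e1].
- by right; exists b; split; [right|left; apply: inj; rewrite -e1 -e2|rewrite e1].
- by right; exists b; split; [right|right; apply: inj; rewrite -e1 -e2|rewrite e1].
Qed.

Lemma meet_poly (v : L) s (w : L) q h : path covers v s -> path covers w q ->
  s != [::] -> q != [::] ->
  (pos v).2 <= h -> h <= (pos (last v s)).2 ->
  (pos w).2 <= h -> h <= (pos (last w q)).2 ->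
  xat (pos v) (map pos s) h = xat (pos w) (map pos q) h ->
  (exists w1 w2, [/\ w1 \in v :: s, w2 \in v :: s, w1 \in w :: q, w2 \in w :: q & covers w1 w2])
  \/ (exists x, [/\ x \in v :: s, x \in w :: q & (pos x).2 = h]).
Proof.
move=> ps pq sn qn h1 h2 h3 h4 E.
have [w1 [w2 [i1 i2 c12 s12]]] := on_poly ps sn h1 h2.
have [w3 [w4 [i3 i4 c34 s34]]] := on_poly pq qn h3 h4.
rewrite E in s12.
have [[e1 e2]|[x [ex1 ex2 ep]]] := cross c12 c34 s12 s34.
  by left; exists w1, w2; rewrite e1 e2 in i1 i2 *; split.
right; exists x; split; last by rewrite ep.
  by case: ex1 => ->.
by case: ex2 => ->.
Qed.
End Lat2.

Section Lat3.
Context {R : realFieldType} {disp : Order.disp_t} {L : finTBLatticeType disp}.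
Context (pos : L -> R * R) (Hpl : planar_diagram pos).
Local Open Scope ring_scope.
Local Open Scope order_scope.

Lemma KG (u a t y l1 r1 : L) Lp sR sE :
  path covers u (rcons (l1 :: Lp) t) ->
  last l1 Lp = a ->
  det2 (vsub (pos l1) (pos u)) (vsub (pos r1) (pos u)) < 0 ->
  path covers u (r1 :: sR) -> last r1 sR = t ->
  (forall v, v \in u :: rcons (l1 :: Lp) t -> v \in u :: r1 :: sR -> v = u \/ v = t) ->
  ~~ covers u t ->
  det2 (vsub (pos t) (pos a)) (vsub (pos y) (pos a)) < 0 ->
  covers a y -> path covers y sE ->
  (pos t).2 <= (pos (last y sE)).2 ->
  (forall v, v \in y :: sE -> ~~ (v <= t)) ->
  False.
Proof.
move=> pL la hdu pR lR common nut hda hay pE htop Evert.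
have := pL; rewrite rcons_path => /andP[pL0]; rewrite /= la => hat.
have ua : u < a.
  have := path_gt pL0 => /allP; apply; rewrite -la; exact: mem_last.
have lastL : last u (rcons (l1 :: Lp) t) = t by rewrite last_rcons.
have lastR : last u (r1 :: sR) = t by [].
have memL : forall v, v \in u :: rcons (l1 :: Lp) t -> v <= t.
  by move=> v hv; have := path_le_last pL hv; rewrite lastL.
have memR : forall v, v \in u :: r1 :: sR -> v <= t.
  by move=> v hv; have := path_le_last pR hv; rewrite lastR.
set sL := rcons (l1 :: Lp) t in pL lastL memL common.
have ylL := path_ylt Hpl pL; have ylR := path_ylt Hpl pR.
have ylE := path_ylt Hpl pE.
have ul1 : (pos u).2 < (pos l1).2 by apply: (covers_h Hpl); case/andP: pL0.
have ur1 : (pos u).2 < (pos r1).2 by apply: (covers_h Hpl); case/andP: pR.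
have hua : (pos u).2 < (pos a).2 := lt_h Hpl ua.
have hat' : (pos a).2 < (pos t).2 := covers_h Hpl hat.
have hay' : (pos a).2 < (pos y).2 := covers_h Hpl hay.
have sLn : sL != [::] by rewrite /sL.
have S1 : forall h, (pos u).2 < h -> h < (pos t).2 ->
    xat (pos u) (map pos sL) h < xat (pos u) (map pos (r1 :: sR)) h.
  move=> h2 hu2 h2t; rewrite ltNge; apply/negP => f2.
  set m := Order.min (pos l1).2 (Order.min (pos r1).2 h2).
  have um : (pos u).2 < m by rewrite !lt_min ul1 ur1 hu2.
  have m1 : m <= (pos l1).2 by rewrite ge_min lexx.
  have m2 : m <= (pos r1).2 by rewrite ge_min ge_min lexx orbT.
  have m3 : m <= h2 by rewrite ge_min ge_min lexx !orbT.
  set h1 := ((pos u).2 + m) / 2%:R.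
  have hh1 : (pos u).2 < h1 by rewrite /h1; lra.
  have hh2 : h1 < m by rewrite /h1; lra.
  have f1 : xat (pos u) (map pos sL) h1 < xat (pos u) (map pos (r1 :: sR)) h1.
    rewrite /sL /= (ltW (lt_le_trans hh2 m1)) (ltW (lt_le_trans hh2 m2)).
    exact: xs_lt.
  have eL : h2 <= (last (pos u) (map pos sL)).2 by rewrite last_map lastL ltW.
  have eR : h2 <= (last (pos u) (map pos (r1 :: sR))).2 by rewrite last_map lastR ltW.
  have [h [/andP[hh1' hh2'] E]] := ivt (leqnn _) ylL ylR (ltW hh1) (ltW hh1)
     (ltW (lt_le_trans hh2 m3)) eL eR f1 f2.
  have hu : (pos u).2 < h := lt_trans hh1 hh1'.
  have ht : h < (pos t).2 := le_lt_trans hh2' h2t.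
  have eL' : h <= (pos (last u sL)).2 by rewrite lastL ltW.
  have eR' : h <= (pos (last u (r1 :: sR))).2 by rewrite lastR ltW.
  have [[w1 [w2 [i1 i2 i3 i4 c12]]] | [x [ix1 ix2 ex]]] :=
    meet_poly Hpl pL pR sLn isT (ltW hu) eL' (ltW hu) eR' E.
    have lt12 := covers_lt c12.
    case: (common _ i1 i3) => e1; case: (common _ i2 i4) => e2;
      rewrite e1 e2 ?ltxx in lt12 c12 => //.
    - by rewrite c12 in nut.
    - by have := memL _ (mem_head _ _); rewrite (lt_geF lt12).
  by case: (common _ ix1 ix2) => ex'; rewrite -ex' ex ltxx in hu ht.
set mm := Num.min (pos t).2 (pos y).2.
have am : (pos a).2 < mm by rewrite lt_min hat' hay'.
set ha := ((pos a).2 + mm) / 2%:R.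
have ha1 : (pos a).2 < ha by rewrite /ha; lra.
have ha2 : ha < mm by rewrite /ha; lra.
have hat2 : ha < (pos t).2 by apply: lt_le_trans ha2 _; rewrite ge_min lexx.
have hay2 : ha < (pos y).2 by apply: lt_le_trans ha2 _; rewrite ge_min lexx orbT.
have pE' : path covers a (y :: sE) by rewrite /= hay pE.
have ylE' := path_ylt Hpl pE'.
have xE : xat (pos a) (map pos (y :: sE)) ha = xs (pos a) (pos y) ha.
  by rewrite /= (ltW hay2).
have xL : xat (pos u) (map pos sL) ha = xs (pos a) (pos t) ha.
  rewrite /sL map_rcons -cats1 xat_cat.
    by rewrite last_map /= la /= (ltW hat2).
  apply/allP => W /mapP [v hv ->].
  have hv' : v \in u :: l1 :: Lp by rewrite inE hv orbT.
  have := path_le_last pL0 hv'; rewrite /= la => /(le_h Hpl) hva.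
  exact: le_lt_trans hva ha1.
have fL : xat (pos u) (map pos sL) ha < xat (pos a) (map pos (y :: sE)) ha.
  by rewrite xL xE; apply: xs_lt.
have tin : t \in u :: sL by rewrite /sL inE mem_rcons mem_head orbT.
have tinR : t \in u :: r1 :: sR by rewrite -lR inE mem_last orbT.
have tL : xat (pos u) (map pos sL) (pos t).2 = (pos t).1.
  exact: (xat_vertex ylL (map_f pos tin)).
have tR : xat (pos u) (map pos (r1 :: sR)) (pos t).2 = (pos t).1.
  exact: (xat_vertex ylR (map_f pos tinR)).
have Evert' : forall v, v \in a :: y :: sE -> v <= t -> v = a.
  move=> v; rewrite inE => /orP[/eqP -> // | hv] hvt.
  by have := Evert v hv; rewrite hvt.
have htop' : (pos t).2 <= (pos (last a (y :: sE))).2 by [].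
have tE : xat (pos a) (map pos (y :: sE)) (pos t).2 != (pos t).1.
  apply/eqP => e.
  have [w1 [w2 [i1 i2 c12 sg]]] := on_poly Hpl pE' isT (ltW hat') htop'.
  rewrite e in sg.
  have ept : ((pos t).1, (pos t).2) = pos t by case: (pos t).
  rewrite ept in sg.
  case: Hpl => _ _ H3 _.
  have := H3 _ _ _ c12 sg => -[et|et]; rewrite -et in i1 i2.
    by have := Evert' t i1 (lexx t) => eta; move: (covers_lt hat); rewrite eta ltxx.
  by have := Evert' t i2 (lexx t) => eta; move: (covers_lt hat); rewrite eta ltxx.
have lastL' : (pos t).2 <= (last (pos u) (map pos sL)).2 by rewrite last_map lastL.
have lastR' : (pos t).2 <= (last (pos u) (map pos (r1 :: sR))).2 by rewrite last_map lastR.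
have lastE' : (pos t).2 <= (last (pos a) (map pos (y :: sE))).2 by rewrite last_map.
have eLt : (pos t).2 <= (pos (last u sL)).2 by rewrite lastL.
have eRt : (pos t).2 <= (pos (last u (r1 :: sR))).2 by rewrite lastR.
case: (ltgtP (xat (pos a) (map pos (y :: sE)) (pos t).2) (pos t).1) => hE; last first.
- by rewrite hE eqxx in tE.
- (* E is to the right at t: crosses R *)
  have ain : a \in u :: sL by rewrite /sL inE mem_rcons inE -la mem_last !orbT.
  have xLa : xat (pos u) (map pos sL) (pos a).2 = (pos a).1.
    exact: (xat_vertex ylL (map_f pos ain)).
  have f1 : xat (pos a) (map pos (y :: sE)) (pos a).2 < xat (pos u) (map pos (r1 :: sR)) (pos a).2.
    by rewrite xat_head // -xLa; apply: S1.
  have f2 : xat (pos u) (map pos (r1 :: sR)) (pos t).2 <= xat (pos a) (map pos (y :: sE)) (pos t).2.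
    by rewrite tR ltW.
  have [h [/andP[hh1 hh2] E]] := ivt (leqnn _) ylE' ylR (lexx _) (ltW hua) (ltW hat')
     lastE' lastR' f1 f2.
  have eh1 : h <= (pos (last a (y :: sE))).2 by apply: le_trans hh2 _.
  have eh2 : h <= (pos (last u (r1 :: sR))).2 by rewrite lastR.
  have [[w1 [w2 [i1 i2 i3 i4 c12]]] | [x [ix1 ix2 ex]]] :=
    meet_poly Hpl pE' pR isT isT (ltW hh1) eh1 (ltW (lt_trans hua hh1)) eh2 E.
    have e1 := Evert' _ i1 (memR _ i3); have e2 := Evert' _ i2 (memR _ i4).
    by move: (covers_lt c12); rewrite e1 e2 ltxx.
  have := Evert' _ ix1 (memR _ ix2) => exa.
  by move: hh1; rewrite -ex exa ltxx.
- (* E is to the left at t: crosses L *)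
  have f2 : xat (pos a) (map pos (y :: sE)) (pos t).2 <= xat (pos u) (map pos sL) (pos t).2.
    by rewrite tL ltW.
  have [h [/andP[hh1 hh2] E]] := ivt (leqnn _) ylL ylE' (ltW (lt_trans hua ha1)) (ltW ha1)
     (ltW hat2) lastL' lastE' fL f2.
  have eh1 : h <= (pos (last a (y :: sE))).2 by apply: le_trans hh2 _.
  have eh2 : h <= (pos (last u sL)).2 by rewrite lastL.
  have [[w1 [w2 [i1 i2 i3 i4 c12]]] | [x [ix1 ix2 ex]]] :=
    meet_poly Hpl pL pE' sLn isT (ltW (lt_trans (lt_trans hua ha1) hh1)) eh2
       (ltW (lt_trans ha1 hh1)) eh1 E.
    have e1 := Evert' _ i3 (memL _ i1); have e2 := Evert' _ i4 (memL _ i2).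
    by move: (covers_lt c12); rewrite e1 e2 ltxx.
  have := Evert' _ ix2 (memL _ ix1) => exa.
  by move: hh1; rewrite -ex exa => /(lt_trans ha1); rewrite ltxx.
Qed.
End Lat3.

Section Lat4.
Context {R : realFieldType} {disp : Order.disp_t} {L : finTBLatticeType disp}.
Context (pos : L -> R * R) (Hpl : planar_diagram pos).
Local Open Scope ring_scope.
Local Open Scope order_scope.

Definition lstep (x y : L) : bool := covers x y &&
  [forall w, (covers x w && (w != y)) ==>
     (det2 (vsub (pos y) (pos x)) (vsub (pos w) (pos x)) < 0)%R].

Lemma lb_path a : left_boundary pos a -> exists s, path lstep \bot s /\ last \bot s = a.
Proof.
elim => [|x y _ [s [ps ls]] hc hl]; first by exists [::].
exists (rcons s y); rewrite rcons_path ps ls last_rcons; split => //.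
rewrite /lstep hc /=; apply/forallP => w; apply/implyP => /andP[h1 h2].
by apply: hl => //; apply/eqP.
Qed.

Lemma lstep_covers : subrel lstep covers.
Proof. by move=> x y /andP[]. Qed.

Lemma cut (z : L) s (w : L) : path lstep w s -> w <= z ->
  exists u s', [/\ u <= z, path lstep u s', last u s' = last w s &
     all (fun v => ~~ (v <= z)) s'].
Proof.
elim: s w => [|x s IH] w /=.
  by move=> _ hw; exists w, [::].
move=> /andP[hx p] hw; case: (boolP (x <= z)) => hxz.
  exact: IH.
exists w, (x :: s); split => //; first by rewrite /= hx p.
apply/allP => v hv; apply/negP => hvz.
have pc : path covers x s by apply: sub_path p; apply: lstep_covers.
by move: hxz; rewrite (le_trans (path_ge_head pc hv) hvz).
Qed.

Lemma covs_between (x w v : L) : covers x w -> x < v -> v < w -> False.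
Proof. by move=> /andP[_ /forallP H] h1 h2; have := H v; rewrite h1 h2. Qed.

Lemma key (a t z y : L) : left_boundary pos a -> covers a t ->
  (forall w, covers a w -> w <> t ->
     (det2 (vsub (pos t) (pos a)) (vsub (pos w) (pos a)) < 0)%R) ->
  covers z t -> z != a -> covers a y -> y != t -> False.
Proof.
move=> lba hat hl hzt hza hay hyt.
have [s [ps ls]] := lb_path lba.
have [u [s' [uz ps' ls' hall]]] := cut ps (le0x z).
rewrite ls in ls'.
have naz : ~~ (a <= z).
  apply/negP => haz; apply: (covs_between hat (v := z)); last exact: covers_lt.
  by rewrite lt_neqAle eq_sym hza haz.
case: s' ps' ls' hall => [|l1 Lp] ps' ls' hall.
  by move: uz; rewrite /= in ls'; rewrite ls' (negbTE naz).
rewrite /= in ls'.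
have pc' : path covers u (l1 :: Lp) by apply: sub_path ps'; apply: lstep_covers.
have ain : a \in l1 :: Lp by rewrite -ls' mem_last.
have ua : u < a by have := path_gt pc' => /allP; apply.
have la_le : forall v, v \in u :: l1 :: Lp -> v <= a.
  by move=> v hv; have := path_le_last pc' hv; rewrite /= ls'.
have [sRz [pRz lRz]] := chain uz.
have [r1 [sR' esR]] : exists r1 sR', rcons sRz t = r1 :: sR'.
  by case: (sRz) => [|r q]; [exists t, [::] | exists r, (rcons q t)].
have pR : path covers u (r1 :: sR') by rewrite -esR rcons_path pRz lRz hzt.
have lR : last r1 sR' = t by have := last_rcons u sRz t; rewrite esR.
have memR : forall v, v \in u :: r1 :: sR' -> v = t \/ v <= z.
  move=> v; rewrite -esR inE mem_rcons inE => /or3P[/eqP ->|/eqP ->|hv].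
  - by right.
  - by left.
  - by right; have := path_le_last pRz (w := v); rewrite lRz inE hv orbT => /(_ isT).
have hdet : (det2 (vsub (pos l1) (pos u)) (vsub (pos r1) (pos u)) < 0)%R.
  move: ps' => /= /andP[/andP[_ /forallP /(_ r1) /implyP H] _]; apply: H.
  apply/andP; split; first by case/andP: pR.
  apply/negP => /eqP e1.
  have l1z : ~~ (l1 <= z) by have := hall; rewrite /= => /andP[].
  case: (memR r1); first by rewrite inE mem_head orbT.
    move=> er; have := la_le l1; rewrite inE mem_head orbT -e1 er => /(_ isT) hta.
    by have := lt_geF (covers_lt hat); rewrite hta.
  by rewrite e1 (negbTE l1z).
have pL : path covers u (rcons (l1 :: Lp) t) by rewrite rcons_path pc' /= ls' hat.
have common : forall v, v \in u :: rcons (l1 :: Lp) t -> v \in u :: r1 :: sR' -> v = u \/ v = t.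
  move=> v; rewrite inE mem_rcons inE => /orP[/eqP -> _|/orP[/eqP -> _|hv hR]].
  - by left.
  - by right.
  have := allP hall v hv => nvz.
  by case: (memR v hR) => [->|hvz]; [right | move: nvz; rewrite hvz].
have nut : ~~ covers u t.
  by apply/negP => hut; apply: (covs_between hut ua); exact: covers_lt.
have hyt' : y <> t by apply/eqP.
have hda := hl y hay hyt'.
have [sE [pE lE]] := chain (lex1 y).
have htop : ((pos t).2 <= (pos (last y sE)).2)%R by rewrite lE; apply: (le_h Hpl); exact: lex1.
have Evert : forall v, v \in y :: sE -> ~~ (v <= t).
  move=> v hv; apply/negP => hvt.
  have hyv := path_ge_head pE hv.
  have hy : y <= t := le_trans hyv hvt.
  have : y < t by rewrite lt_neqAle hy andbT; apply/eqP.
  by apply: (covs_between hat); exact: covers_lt.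
exact: (KG Hpl pL ls' hdet pR lR common nut hda hay pE htop Evert).
Qed.
End Lat4.

Theorem lemma2p3 (R : realFieldType) (disp : Order.disp_t)
    (L : finTBLatticeType disp) (pos : L -> R * R) :
  (4 <= #|L|)%N ->
  upper_semimodular (L := L) -> slim (L := L) ->
  planar_diagram pos ->
  forall c : L,
    left_boundary pos c -> doubly_irreducible c ->
    (forall c' : L, left_boundary pos c' -> doubly_irreducible c' -> (c <= c')%O) ->
  forall x : L, left_boundary pos x -> (x <= c)%O ->
    (#|lower_covers x| <= 1)%N.
Proof.
move=> _ _ _ Hpl c _ _ hmin x hx.
elim: hx => [|a y ha IH hcov hleft] hxc.
  have -> : lower_covers (\bot%O : L) = set0.
    apply/setP => w; rewrite !inE; apply/negP => /covers_lt; by rewrite ltx0.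
  by rewrite cards0.
rewrite leqNgt; apply/negP => h2.
have hac : (a <= c)%O := Order.POrderTheory.le_trans (ltW (covers_lt hcov)) hxc.
have la := IH hac.
have [z [hz hza]] : exists z, z \in lower_covers y /\ z != a.
  have [w1 [w2 [i1 i2 ne]]] := card_gt1P h2.
  case: (eqVneq w1 a) => e; [exists w2 | exists w1]; split => //.
  by rewrite -e eq_sym.
have uc : (#|upper_covers a| <= 1)%N.
  rewrite -(cards1 y); apply: subset_leq_card; apply/subsetP => w; rewrite !inE => hw.
  case: (eqVneq w y) => // ne; exfalso.
  rewrite inE in hz.
  exact: (key Hpl ha hcov hleft hz hza hw ne).
have dia : doubly_irreducible a by rewrite /doubly_irreducible la uc.
have := hmin a ha dia => hca.
have := Order.POrderTheory.le_lt_trans hca (covers_lt hcov).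
by move/lt_geF; rewrite hxc.
Qed.
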